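(* Let $\mathcal{V}$ be a braided monoidal category (tensor $\otimes$, unit $I$, braiding $c$) having reflexive coequalizers which are preserved by each functor $X\otimes -$. Let $(A,\delta,\varepsilon,q)$ be a herd in $\mathcal{V}$, let $\sigma=(q\otimes 1)(1\otimes 1\otimes \delta)$ and $\tau=1\otimes 1\otimes \varepsilon$ as morphisms $A\otimes A\otimes A\to A\otimes A$, and let $\varpi:A\otimes A\to H$ be the coequalizer of $\sigma$ and $\tau$, equipped with the unique comonoid structure making $\varpi:A\otimes A^{\circ}\to H$ a comonoid morphism. Let $\mu:H\otimes H\to H$ be the unique morphism with $\mu(\varpi\otimes\varpi)=\varpi(q\otimes 1)$ as morphisms $A^{\otimes 4}\to H$. Then $\mu$ is associative, and $\mu$ is a comonoid morphism $H\otimes H\to H$ (where $H\otimes H$ carries the tensor product comonoid structure).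
   Context: For a comonoid $A=(A,\delta,\varepsilon)$ in $\mathcal{V}$, the opposite comonoid $A^{\circ}$ is $(A, c_{A,A}\delta,\varepsilon)$. For comonoids $A,B$, the tensor comonoid $A\otimes B$ has comultiplication $(1\otimes c_{A,B}\otimes 1)(\delta\otimes\delta)$ and counit $\varepsilon\otimes\varepsilon$. A herd in $\mathcal{V}$ is a comonoid $A$ together with a comonoid morphism $q:A\otimes A^{\circ}\otimes A\to A$ such that $q(q\otimes 1\otimes 1)=q(1\otimes 1\otimes q):A^{\otimes 5}\to A$, $q(1\otimes\delta)=1\otimes\varepsilon:A\otimes A\to A$, and $q(\delta\otimes 1)=\varepsilon\otimes 1:A\otimes A\to A$. (The pair $\sigma,\tau$ is reflexive with common right inverse $1\otimes\delta$, and the coequalizer $\varpi\otimes\varpi$ of $\sigma\otimes\sigma,\tau\otimes\tau$ is used to define $\mu$.) *)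

(* Defs.v *)
Record BMCData : Type := {
  ob :> Type;
  hom : ob -> ob -> Type;
  comp : forall a b c : ob, hom b c -> hom a b -> hom a c;
  idm : forall a : ob, hom a a;
  tens : ob -> ob -> ob;
  tensm : forall a b c d : ob, hom a b -> hom c d -> hom (tens a c) (tens b d);
  unitob : ob;
  assoc : forall a b c : ob, hom (tens (tens a b) c) (tens a (tens b c));
  assoc_inv : forall a b c : ob, hom (tens a (tens b c)) (tens (tens a b) c);
  lunit : forall a : ob, hom (tens unitob a) a;
  lunit_inv : forall a : ob, hom a (tens unitob a);
  runit : forall a : ob, hom (tens a unitob) a;
  runit_inv : forall a : ob, hom a (tens a unitob);
  braid : forall a b : ob, hom (tens a b) (tens b a);
  braid_inv : forall a b : ob, hom (tens b a) (tens a b)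
}.

Arguments hom {_} _ _.
Arguments comp {_ a b c} _ _.
Arguments idm {_} a.
Arguments tens {_} _ _.
Arguments tensm {_ a b c d} _ _.
Arguments unitob {_}.
Arguments assoc {_} a b c.
Arguments assoc_inv {_} a b c.
Arguments lunit {_} a.
Arguments lunit_inv {_} a.
Arguments runit {_} a.
Arguments runit_inv {_} a.
Arguments braid {_} a b.
Arguments braid_inv {_} a b.

Declare Scope cat_scope.
Notation "g ∘ f" := (comp g f) (at level 40, left associativity) : cat_scope.
Notation "f ⊗ g" := (tensm f g) (at level 34, left associativity) : cat_scope.
Open Scope cat_scope.

Record IsBMC (C : BMCData) : Prop := {
  comp_idl : forall (a b : C) (f : hom a b), idm b ∘ f = f;
  comp_idr : forall (a b : C) (f : hom a b), f ∘ idm a = f;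
  comp_assoc : forall (a b c d : C) (f : hom a b) (g : hom b c) (h : hom c d),
      h ∘ (g ∘ f) = (h ∘ g) ∘ f;
  tens_id : forall a b : C, idm a ⊗ idm b = idm (tens a b);
  tens_comp : forall (a b c a' b' c' : C) (f : hom a b) (f' : hom b c)
      (g : hom a' b') (g' : hom b' c'),
      (f' ∘ f) ⊗ (g' ∘ g) = (f' ⊗ g') ∘ (f ⊗ g);
  assoc_iso1 : forall a b c : C, assoc_inv a b c ∘ assoc a b c = idm _;
  assoc_iso2 : forall a b c : C, assoc a b c ∘ assoc_inv a b c = idm _;
  assoc_nat : forall (a a' b b' c c' : C) (f : hom a a') (g : hom b b') (h : hom c c'),
      assoc a' b' c' ∘ ((f ⊗ g) ⊗ h) = (f ⊗ (g ⊗ h)) ∘ assoc a b c;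
  lunit_iso1 : forall a : C, lunit_inv a ∘ lunit a = idm _;
  lunit_iso2 : forall a : C, lunit a ∘ lunit_inv a = idm _;
  lunit_nat : forall (a b : C) (f : hom a b), lunit b ∘ (idm unitob ⊗ f) = f ∘ lunit a;
  runit_iso1 : forall a : C, runit_inv a ∘ runit a = idm _;
  runit_iso2 : forall a : C, runit a ∘ runit_inv a = idm _;
  runit_nat : forall (a b : C) (f : hom a b), runit b ∘ (f ⊗ idm unitob) = f ∘ runit a;
  pentagon : forall a b c d : C,
      (idm a ⊗ assoc b c d) ∘ assoc a (tens b c) d ∘ (assoc a b c ⊗ idm d)
      = assoc a b (tens c d) ∘ assoc (tens a b) c d;
  triangle : forall a b : C,
      (idm a ⊗ lunit b) ∘ assoc a unitob b = runit a ⊗ idm b;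
  braid_iso1 : forall a b : C, braid_inv a b ∘ braid a b = idm _;
  braid_iso2 : forall a b : C, braid a b ∘ braid_inv a b = idm _;
  braid_nat : forall (a a' b b' : C) (f : hom a a') (g : hom b b'),
      braid a' b' ∘ (f ⊗ g) = (g ⊗ f) ∘ braid a b;
  hexagon1 : forall a b c : C,
      assoc b c a ∘ braid a (tens b c) ∘ assoc a b c
      = (idm b ⊗ braid a c) ∘ assoc b a c ∘ (braid a b ⊗ idm c);
  hexagon2 : forall a b c : C,
      assoc_inv c a b ∘ braid (tens a b) c ∘ assoc_inv a b c
      = (braid a c ⊗ idm b) ∘ assoc_inv a c b ∘ (idm a ⊗ braid b c)
}.

Section Defs.
Context {C : BMCData}.

Definition IsCoequalizer {X Y Q : C} (f g : hom X Y) (e : hom Y Q) : Prop :=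
  e ∘ f = e ∘ g /\
  forall (Z : C) (h : hom Y Z), h ∘ f = h ∘ g ->
    exists k : hom Q Z, k ∘ e = h /\ forall k' : hom Q Z, k' ∘ e = h -> k' = k.

Definition IsReflexivePair {X Y : C} (f g : hom X Y) : Prop :=
  exists s : hom Y X, f ∘ s = idm Y /\ g ∘ s = idm Y.

Definition HasReflexiveCoequalizers : Prop :=
  forall (X Y : C) (f g : hom X Y), IsReflexivePair f g ->
    exists (Q : C) (e : hom Y Q), IsCoequalizer f g e.

Definition TensorLeftPreservesReflexiveCoequalizers : Prop :=
  forall (X Y Q : C) (f g : hom X Y) (e : hom Y Q),
    IsReflexivePair f g -> IsCoequalizer f g e ->
    forall W : C, IsCoequalizer (idm W ⊗ f) (idm W ⊗ g) (idm W ⊗ e).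

Definition IsComonoid (A : C) (d : hom A (tens A A)) (e : hom A unitob) : Prop :=
  assoc A A A ∘ (d ⊗ idm A) ∘ d = (idm A ⊗ d) ∘ d /\
  lunit A ∘ (e ⊗ idm A) ∘ d = idm A /\
  runit A ∘ (idm A ⊗ e) ∘ d = idm A.

Definition IsComonoidMorphism {A B : C}
    (dA : hom A (tens A A)) (eA : hom A unitob)
    (dB : hom B (tens B B)) (eB : hom B unitob) (f : hom A B) : Prop :=
  dB ∘ f = (f ⊗ f) ∘ dA /\ eB ∘ f = eA.

(* opposite comonoid: comultiplication c_{A,A} δ, same counit *)
Definition opDelta {A : C} (d : hom A (tens A A)) : hom A (tens A A) :=
  braid A A ∘ d.

(* the middle-four interchange (A⊗A')⊗(B⊗B') -> (A⊗B)⊗(A'⊗B'),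
   i.e. 1 ⊗ c_{A',B} ⊗ 1 with the needed associativity constraints *)
Definition middleFour (A A' B B' : C) :
    hom (tens (tens A A') (tens B B')) (tens (tens A B) (tens A' B')) :=
  assoc_inv A B (tens A' B')
  ∘ (idm A ⊗ assoc B A' B')
  ∘ (idm A ⊗ (braid A' B ⊗ idm B'))
  ∘ (idm A ⊗ assoc_inv A' B B')
  ∘ assoc A A' (tens B B').

Definition tensDelta {A B : C} (dA : hom A (tens A A)) (dB : hom B (tens B B)) :
    hom (tens A B) (tens (tens A B) (tens A B)) :=
  middleFour A A B B ∘ (dA ⊗ dB).

Definition tensEps {A B : C} (eA : hom A unitob) (eB : hom B unitob) :
    hom (tens A B) unitob :=
  lunit unitob ∘ (eA ⊗ eB).

(* herds; A ⊗ A° ⊗ A is bracketed as (A ⊗ A°) ⊗ A *)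
Definition IsHerd (A : C) (d : hom A (tens A A)) (e : hom A unitob)
    (q : hom (tens (tens A A) A) A) : Prop :=
  IsComonoid A d e /\
  IsComonoidMorphism (tensDelta (tensDelta d (opDelta d)) d)
                     (tensEps (tensEps e e) e) d e q /\
  q ∘ ((q ⊗ idm A) ⊗ idm A)
    = q ∘ (idm (tens A A) ⊗ q) ∘ (idm (tens A A) ⊗ assoc_inv A A A)
        ∘ assoc (tens A A) A (tens A A) ∘ assoc (tens (tens A A) A) A A /\
  q ∘ assoc_inv A A A ∘ (idm A ⊗ d) = runit A ∘ (idm A ⊗ e) /\
  q ∘ (d ⊗ idm A) = lunit A ∘ (e ⊗ idm A).

Definition herdSigma {A : C} (d : hom A (tens A A)) (q : hom (tens (tens A A) A) A) :
    hom (tens (tens A A) A) (tens A A) :=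
  (q ⊗ idm A) ∘ assoc_inv (tens A A) A A ∘ (idm (tens A A) ⊗ d).

Definition herdTau {A : C} (e : hom A unitob) :
    hom (tens (tens A A) A) (tens A A) :=
  runit (tens A A) ∘ (idm (tens A A) ⊗ e).

End Defs.

(* Main.v *)
Require Import Defs.
From Stdlib Require Import Setoid.

Section Dev.
Context {C : BMCData} (HC : IsBMC C).

Lemma cA {a b c d : C} (f : hom a b) (g : hom b c) (h : hom c d) : h ∘ (g ∘ f) = (h ∘ g) ∘ f.
Proof. apply (comp_assoc C HC). Qed.
Lemma ci {a b : C} (f : hom a b) : idm b ∘ f = f. Proof. apply (comp_idl C HC). Qed.
Lemma cr {a b : C} (f : hom a b) : f ∘ idm a = f. Proof. apply (comp_idr C HC). Qed.
Lemma tc {a b c a' b' c' : C} (f : hom a b) (f' : hom b c) (g : hom a' b') (g' : hom b' c') :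
  (f' ∘ f) ⊗ (g' ∘ g) = (f' ⊗ g') ∘ (f ⊗ g). Proof. apply (tens_comp C HC). Qed.
Lemma ti (a b : C) : idm a ⊗ idm b = idm (tens a b). Proof. apply (tens_id C HC). Qed.

Lemma pre2 {a b c : C} {g : hom b c} {f : hom a b} {r : hom a c} :
  g ∘ f = r -> forall W (h : hom c W), h ∘ g ∘ f = h ∘ r.
Proof. intros E W h. rewrite <- E. now rewrite cA. Qed.
Lemma pre3 {a b c d : C} {g1 : hom c d} {g2 : hom b c} {g3 : hom a b} {r : hom a d} :
  g1 ∘ g2 ∘ g3 = r -> forall W (h : hom d W), h ∘ g1 ∘ g2 ∘ g3 = h ∘ r.
Proof. intros E W h. rewrite <- E. now rewrite !cA. Qed.
Lemma pre4 {a b c d e : C} {g1 : hom d e} {g2 : hom c d} {g3 : hom b c} {g4 : hom a b} {r : hom a e} :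
  g1 ∘ g2 ∘ g3 ∘ g4 = r -> forall W (h : hom e W), h ∘ g1 ∘ g2 ∘ g3 ∘ g4 = h ∘ r.
Proof. intros E W h. rewrite <- E. now rewrite !cA. Qed.
Lemma pre5 {a b c d e f : C} {g1 : hom e f} {g2 : hom d e} {g3 : hom c d} {g4 : hom b c} {g5 : hom a b} {r : hom a f} :
  g1 ∘ g2 ∘ g3 ∘ g4 ∘ g5 = r -> forall W (h : hom f W), h ∘ g1 ∘ g2 ∘ g3 ∘ g4 ∘ g5 = h ∘ r.
Proof. intros E W h. rewrite <- E. now rewrite !cA. Qed.
Lemma pre6 {a b c d e f g : C} {g1 : hom f g} {g2 : hom e f} {g3 : hom d e} {g4 : hom c d} {g5 : hom b c} {g6 : hom a b} {r : hom a g} :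
  g1 ∘ g2 ∘ g3 ∘ g4 ∘ g5 ∘ g6 = r -> forall W (h : hom g W), h ∘ g1 ∘ g2 ∘ g3 ∘ g4 ∘ g5 ∘ g6 = h ∘ r.
Proof. intros E W h. rewrite <- E. now rewrite !cA. Qed.

Ltac norm := repeat rewrite cA.
Ltac simplid := repeat (rewrite ci || rewrite cr).
Tactic Notation "rw" uconstr(E) := first [ rewrite (pre6 E) | rewrite (pre5 E) | rewrite (pre4 E)
  | rewrite (pre3 E) | rewrite (pre2 E) | rewrite E ]; norm; simplid.
Tactic Notation "rwr" uconstr(E) := rw (eq_sym E).

Lemma t1l {a b c d : C} (f : hom b c) (g : hom a b) :
  (f ⊗ idm d) ∘ (g ⊗ idm d) = (f ∘ g) ⊗ idm d.
Proof. now rewrite <- tc, ci. Qed.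
Lemma t1r {a b c d : C} (f : hom b c) (g : hom a b) :
  (idm d ⊗ f) ∘ (idm d ⊗ g) = idm d ⊗ (f ∘ g).
Proof. now rewrite <- tc, ci. Qed.
Lemma tsl {a b c d : C} (f : hom a b) (g : hom c d) : f ⊗ g = (f ⊗ idm d) ∘ (idm a ⊗ g).
Proof. now rewrite <- tc, ci, cr. Qed.
Lemma tsr {a b c d : C} (f : hom a b) (g : hom c d) : f ⊗ g = (idm b ⊗ g) ∘ (f ⊗ idm c).
Proof. now rewrite <- tc, ci, cr. Qed.
Lemma tcomm {a b c d : C} (f : hom a b) (g : hom c d) :
  (f ⊗ idm d) ∘ (idm a ⊗ g) = (idm b ⊗ g) ∘ (f ⊗ idm c).
Proof. now rewrite <- tsl, <- tsr. Qed.

Lemma an {a a' b b' c c' : C} (f : hom a a') (g : hom b b') (h : hom c c') :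
  assoc a' b' c' ∘ ((f ⊗ g) ⊗ h) = (f ⊗ (g ⊗ h)) ∘ assoc a b c.
Proof. apply (assoc_nat C HC). Qed.
Lemma ai1 (a b c : C) : assoc_inv a b c ∘ assoc a b c = idm _. Proof. apply (assoc_iso1 C HC). Qed.
Lemma ai2 (a b c : C) : assoc a b c ∘ assoc_inv a b c = idm _. Proof. apply (assoc_iso2 C HC). Qed.
Lemma ain {a a' b b' c c' : C} (f : hom a a') (g : hom b b') (h : hom c c') :
  assoc_inv a' b' c' ∘ (f ⊗ (g ⊗ h)) = ((f ⊗ g) ⊗ h) ∘ assoc_inv a b c.
Proof.
  rewrite <- (cr (assoc_inv a' b' c' ∘ _)), <- (ai2 a b c). norm.
  rwr (an f g h). rw (ai1 a' b' c'). now simplid.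
Qed.
Lemma pent (a b c d : C) :
  (idm a ⊗ assoc b c d) ∘ assoc a (tens b c) d ∘ (assoc a b c ⊗ idm d)
  = assoc a b (tens c d) ∘ assoc (tens a b) c d.
Proof. apply (pentagon C HC). Qed.
Lemma tri (a b : C) : (idm a ⊗ lunit b) ∘ assoc a unitob b = runit a ⊗ idm b.
Proof. apply (triangle C HC). Qed.
Lemma ln {a b : C} (f : hom a b) : lunit b ∘ (idm unitob ⊗ f) = f ∘ lunit a.
Proof. apply (lunit_nat C HC). Qed.
Lemma rn {a b : C} (f : hom a b) : runit b ∘ (f ⊗ idm unitob) = f ∘ runit a.
Proof. apply (runit_nat C HC). Qed.
Lemma li1 (a : C) : lunit_inv a ∘ lunit a = idm _. Proof. apply (lunit_iso1 C HC). Qed.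
Lemma li2 (a : C) : lunit a ∘ lunit_inv a = idm _. Proof. apply (lunit_iso2 C HC). Qed.
Lemma ri1 (a : C) : runit_inv a ∘ runit a = idm _. Proof. apply (runit_iso1 C HC). Qed.
Lemma ri2 (a : C) : runit a ∘ runit_inv a = idm _. Proof. apply (runit_iso2 C HC). Qed.
Lemma bn {a a' b b' : C} (f : hom a a') (g : hom b b') :
  braid a' b' ∘ (f ⊗ g) = (g ⊗ f) ∘ braid a b.
Proof. apply (braid_nat C HC). Qed.
Lemma bi1 (a b : C) : braid_inv a b ∘ braid a b = idm _. Proof. apply (braid_iso1 C HC). Qed.
Lemma bi2 (a b : C) : braid a b ∘ braid_inv a b = idm _. Proof. apply (braid_iso2 C HC). Qed.

Lemma rcancel {a b c : C} (i : hom a b) (j : hom b a) (f g : hom b c) :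
  i ∘ j = idm b -> f ∘ i = g ∘ i -> f = g.
Proof.
  intros Hij E. rewrite <- (cr f), <- (cr g), <- Hij. norm. now rewrite E.
Qed.
Lemma lcancel {a b c : C} (i : hom b c) (j : hom c b) (f g : hom a b) :
  j ∘ i = idm b -> i ∘ f = i ∘ g -> f = g.
Proof.
  intros Hij E. rewrite <- (ci f), <- (ci g), <- Hij, <- !cA. now rewrite E.
Qed.
Lemma lcancelI {a b : C} (f g : hom a b) : idm unitob ⊗ f = idm unitob ⊗ g -> f = g.
Proof.
  intro E. apply (rcancel (lunit a) (lunit_inv a)); [apply li2|].
  rewrite <- !ln. now rewrite E.
Qed.
Lemma rcancelI {a b : C} (f g : hom a b) : f ⊗ idm unitob = g ⊗ idm unitob -> f = g.
Proof.
  intro E. apply (rcancel (runit a) (runit_inv a)); [apply ri2|].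
  rewrite <- !rn. now rewrite E.
Qed.

Lemma kelly1 (x y : C) : lunit (tens x y) ∘ assoc unitob x y = lunit x ⊗ idm y.
Proof.
  apply lcancelI.
  apply (rcancel (assoc unitob (tens unitob x) y ∘ (assoc unitob unitob x ⊗ idm y))
           ((assoc_inv unitob unitob x ⊗ idm y) ∘ assoc_inv unitob (tens unitob x) y)).
  { norm. rw (t1l (d:=y) (assoc unitob unitob x) (assoc_inv unitob unitob x)). rewrite ai2, ti, cr. apply ai2. }
  rewrite <- (ci (idm unitob)) at 1. rewrite tc. norm.
  rw (pent unitob unitob x y). rw (tri unitob (tens x y)).
  rewrite <- (ti x y). rwr (an (runit unitob) (idm x) (idm y)).
  rewrite <- tri. rewrite <- t1l. norm. rw (an (idm unitob) (lunit x) (idm y)).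
  reflexivity.
Qed.


Lemma kelly2 (x y : C) : (idm x ⊗ runit y) ∘ assoc x y unitob = runit (tens x y).
Proof.
  apply rcancelI.
  apply (lcancel (assoc x y unitob) (assoc_inv x y unitob)); [apply ai1|].
  symmetry. rewrite <- tri, <- (ti x y). norm.
  rw (an (idm x) (idm y) (lunit unitob)). rwr (pent x y unitob unitob).
  rewrite t1r, tri. rwr (an (idm x) (runit y) (idm unitob)).
  rw (@t1l _ _ _ _ _ _). reflexivity.
Qed.

Lemma kelly3 : lunit (@unitob C) = runit unitob.
Proof.
  apply rcancelI. rewrite <- kelly1, <- tri. f_equal.
  apply (lcancel (lunit (@unitob C)) (lunit_inv unitob)); [apply li1|].
  symmetry. apply ln.
Qed.


Ltac split1 := repeat (rewrite <- t1r || rewrite <- t1l); norm.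

Lemma t1i {a b c : C} (f : hom a b) (g : hom b a) : f ∘ g = idm b -> (f ⊗ idm c) ∘ (g ⊗ idm c) = idm _.
Proof. intro E. now rewrite t1l, E, ti. Qed.
Lemma it1 {a b c : C} (f : hom a b) (g : hom b a) : f ∘ g = idm b -> (idm c ⊗ f) ∘ (idm c ⊗ g) = idm _.
Proof. intro E. now rewrite t1r, E, ti. Qed.

Lemma pA (a b c d : C) :
  assoc a b (tens c d) ∘ assoc (tens a b) c d ∘ (assoc_inv a b c ⊗ idm d)
  = (idm a ⊗ assoc b c d) ∘ assoc a (tens b c) d.
Proof.
  rewrite <- (pent a b c d). norm. rw (t1i _ _ (ai2 a b c)). now simplid.
Qed.
Lemma pB (a b c d : C) :
  assoc a (tens b c) d ∘ (assoc a b c ⊗ idm d)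
  = (idm a ⊗ assoc_inv b c d) ∘ assoc a b (tens c d) ∘ assoc (tens a b) c d.
Proof.
  rwr (pent a b c d). rw (it1 _ _ (ai1 b c d)). now simplid.
Qed.
Lemma pD (a b c d : C) :
  assoc (tens a b) c d ∘ (assoc_inv a b c ⊗ idm d)
  = assoc_inv a b (tens c d) ∘ (idm a ⊗ assoc b c d) ∘ assoc a (tens b c) d.
Proof.
  rwr (pA a b c d). rw (ai1 a b (tens c d)). now simplid.
Qed.
Lemma pC (a b c d : C) :
  assoc (tens a b) c d ∘ (assoc_inv a b c ⊗ idm d) ∘ assoc_inv a (tens b c) d
  = assoc_inv a b (tens c d) ∘ (idm a ⊗ assoc b c d).
Proof.
  rw (pD a b c d). rw (ai2 a (tens b c) d). now simplid.
Qed.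
Lemma pE (a b c d : C) :
  assoc a (tens b c) d ∘ (assoc a b c ⊗ idm d) ∘ assoc_inv (tens a b) c d
  = (idm a ⊗ assoc_inv b c d) ∘ assoc a b (tens c d).
Proof.
  rw (pB a b c d). rw (ai2 (tens a b) c d). now simplid.
Qed.
Lemma pF (a b c d : C) :
  (assoc a b c ⊗ idm d) ∘ assoc_inv (tens a b) c d
  = assoc_inv a (tens b c) d ∘ (idm a ⊗ assoc_inv b c d) ∘ assoc a b (tens c d).
Proof.
  apply (lcancel (assoc a (tens b c) d) (assoc_inv a (tens b c) d)); [apply ai1|].
  norm. rw (pE a b c d). rw (ai2 a (tens b c) d). now simplid.
Qed.
Lemma pI (a b c d : C) :
  assoc_inv (tens a b) c d ∘ assoc_inv a b (tens c d)
  = (assoc_inv a b c ⊗ idm d) ∘ assoc_inv a (tens b c) d ∘ (idm a ⊗ assoc_inv b c d).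
Proof.
  apply (lcancel (assoc a b (tens c d) ∘ assoc (tens a b) c d)
     (assoc_inv (tens a b) c d ∘ assoc_inv a b (tens c d))).
  { norm. rw (ai1 a b (tens c d)). simplid. apply ai1. }
  norm. rw (ai2 (tens a b) c d). rewrite ai2.
  rwr (pent a b c d). rw (t1i _ _ (ai2 a b c)). rw (ai2 a (tens b c) d).
  now rewrite (it1 _ _ (ai2 b c d)).
Qed.

Lemma hex1' (x b c : C) :
  braid x (tens b c) = assoc_inv b c x ∘ (idm b ⊗ braid x c) ∘ assoc b x c
      ∘ (braid x b ⊗ idm c) ∘ assoc_inv x b c.
Proof.
  rwr (hexagon1 C HC x b c). rewrite ai1. simplid. rw (ai2 x b c). reflexivity.
Qed.
Lemma hex2' (x y c : C) :
  braid (tens x y) c = assoc c x y ∘ (braid x c ⊗ idm y) ∘ assoc_inv x c y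
      ∘ (idm x ⊗ braid y c) ∘ assoc x y c.
Proof.
  rwr (hexagon2 C HC x y c). rewrite ai2. simplid. rw (ai1 x y c). reflexivity.
Qed.

Definition Mx (x b w : C) : hom (tens x (tens b w)) (tens b (tens x w)) :=
  assoc b x w ∘ (braid x b ⊗ idm w) ∘ assoc_inv x b w.

Lemma mF_eq (a x b y : C) :
  middleFour a x b y = assoc_inv a b (tens x y) ∘ (idm a ⊗ Mx x b y) ∘ assoc a x (tens b y).
Proof. unfold middleFour, Mx. split1. reflexivity. Qed.

Lemma Mnat {x x' b b' w w' : C} (f : hom x x') (g : hom b b') (h : hom w w') :
  Mx x' b' w' ∘ (f ⊗ (g ⊗ h)) = (g ⊗ (f ⊗ h)) ∘ Mx x b w.
Proof.
  unfold Mx. norm. rw (ain f g h). rwr (tc (f ⊗ g) (braid x' b') h (idm w')).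
  rewrite bn. simplid.
  replace ((g ⊗ f ∘ braid x b) ⊗ h) with (((g ⊗ f) ⊗ h) ∘ (braid x b ⊗ idm w)) by (now rewrite <- tc, cr).
  norm. rw (an g f h). reflexivity.
Qed.


Lemma hexM1 (x b c w : C) :
  assoc b c (tens x w) ∘ Mx x (tens b c) w
  = (idm b ⊗ Mx x c w) ∘ Mx x b (tens c w) ∘ (idm x ⊗ assoc b c w).
Proof.
  unfold Mx. norm. rewrite (hex1' x b c). split1.
  rw (pA b c x w). rw (an (idm b) (braid x c) (idm w)). rw (pB b x c w).
  rw (an (braid x b) (idm c) (idm w)). rw (pC x b c w). rewrite ti. reflexivity.
Qed.


Lemma hexM2 (x y c z : C) :
  Mx (tens x y) c z
  = (idm c ⊗ assoc_inv x y z) ∘ Mx x c (tens y z) ∘ (idm x ⊗ Mx y c z) ∘ assoc x y (tens c z).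
Proof.
  unfold Mx. norm. rewrite (hex2' x y c). split1.
  rw (pB c x y z). rw (an (braid x c) (idm y) (idm z)). rewrite ti.
  rw (pD x c y z). rw (an (idm x) (braid y c) (idm z)). rw (pE x y c z).
  reflexivity.
Qed.

Lemma LpR (x b y w : C) :
  assoc b (tens x y) w ∘ (Mx x b y ⊗ idm w) ∘ assoc_inv x (tens b y) w ∘ (idm x ⊗ assoc_inv b y w)
  = (idm b ⊗ assoc_inv x y w) ∘ Mx x b (tens y w).
Proof.
  unfold Mx. split1. rwr (pI x b y w).
  rwr (ain (braid x b) (idm y) (idm w)). rw (pE b x y w). rewrite ti. reflexivity.
Qed.


Lemma Lp (x b y c z : C) :
  Mx x (tens b c) (tens y z) ∘ (idm x ⊗ middleFour b y c z) ∘ assoc x (tens b y) (tens c z)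
  = (idm (tens b c) ⊗ assoc x y z) ∘ assoc_inv b c (tens (tens x y) z)
    ∘ (idm b ⊗ Mx (tens x y) c z) ∘ assoc b (tens x y) (tens c z) ∘ (Mx x b y ⊗ idm (tens c z)).
Proof.
  apply (lcancel (assoc b c (tens x (tens y z))) (assoc_inv b c (tens x (tens y z)))); [apply ai1|].
  apply (rcancel (assoc_inv x (tens b y) (tens c z) ∘ (idm x ⊗ assoc_inv b y (tens c z)))
     ((idm x ⊗ assoc b y (tens c z)) ∘ assoc x (tens b y) (tens c z))).
  { norm. rw (it1 _ _ (ai1 b y (tens c z))). apply ai1. }
  norm. rw (ai2 x (tens b y) (tens c z)). rewrite mF_eq. split1.
  rw (it1 _ _ (ai2 b y (tens c z))). rw (hexM1 x b c (tens y z)).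
  rw (it1 _ _ (ai2 b c (tens y z))). rw (Mnat (idm x) (idm b) (Mx y c z)).
  rw (LpR x b y (tens c z)). rewrite <- (ti b c).
  rw (an (idm b) (idm c) (assoc x y z)). rw (ai2 b c (tens (tens x y) z)).
  rewrite (hexM2 x y c z). split1.
  rw (it1 _ _ (it1 _ _ (ai2 x y z))). rw (it1 _ _ (ai2 x y (tens c z))).
  reflexivity.
Qed.


Lemma mF_assoc (a x b y c z : C) :
  middleFour a x (tens b c) (tens y z) ∘ (idm (tens a x) ⊗ middleFour b y c z)
    ∘ assoc (tens a x) (tens b y) (tens c z)
  = (assoc a b c ⊗ assoc x y z) ∘ middleFour (tens a b) (tens x y) c z
    ∘ (middleFour a x b y ⊗ idm (tens c z)).
Proof.
  rewrite (mF_eq a x (tens b c) (tens y z)), (mF_eq (tens a b) (tens x y) c z), (mF_eq a x b y).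
  norm. rewrite <- (ti a x). rw (an (idm a) (idm x) (middleFour b y c z)).
  rwr (pent a x (tens b y) (tens c z)).
  rw (t1r (d:=a) (Mx x (tens b c) (tens y z)) (idm x ⊗ middleFour b y c z)).
  rw (t1r (d:=a) (Mx x (tens b c) (tens y z) ∘ (idm x ⊗ middleFour b y c z)) (assoc x (tens b y) (tens c z))).
  rewrite Lp. split1.
  rwr (an (idm a) (Mx x b y) (idm (tens c z))).
  rwr (pA a b (tens x y) (tens c z)).
  rwr (an (idm a) (idm b) (Mx (tens x y) c z)). rewrite (ti a b).
  rw (ain (idm a) (idm (tens b c)) (assoc x y z)).
  rwr (pF a b c (tens (tens x y) z)).
  rewrite (ti a (tens b c)). rwr (tc (assoc a b c) (idm _) (idm _) (assoc x y z)).
  simplid. reflexivity.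
Qed.


Lemma mF_nat {a a' b b' c c' d d' : C} (f : hom a b) (f' : hom a' b') (g : hom c d) (g' : hom c' d') :
  middleFour b b' d d' ∘ ((f ⊗ f') ⊗ (g ⊗ g')) = ((f ⊗ g) ⊗ (f' ⊗ g')) ∘ middleFour a a' c c'.
Proof.
  rewrite !mF_eq. norm. rw (an f f' (g ⊗ g')).
  rwr (tc f (idm b) (f' ⊗ (g ⊗ g')) (Mx b' d d')). rewrite Mnat.
  replace (f ⊗ ((g ⊗ (f' ⊗ g')) ∘ Mx a' c c')) with ((f ⊗ (g ⊗ (f' ⊗ g'))) ∘ (idm a ⊗ Mx a' c c'))
    by (now rewrite <- tc, cr).
  norm. rw (ain f g (f' ⊗ g')). reflexivity.
Qed.

Lemma CMcomp {a b c : C} (da : hom a (tens a a)) (ea : hom a unitob)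
  (db : hom b (tens b b)) (eb : hom b unitob) (dc : hom c (tens c c)) (ec : hom c unitob)
  (f : hom a b) (g : hom b c) :
  IsComonoidMorphism da ea db eb f -> IsComonoidMorphism db eb dc ec g ->
  IsComonoidMorphism da ea dc ec (g ∘ f).
Proof.
  intros [F1 F2] [G1 G2]. split.
  - norm. rewrite G1, <- cA, F1. now rewrite cA, tc.
  - norm. now rewrite G2, F2.
Qed.

Lemma CMid {a : C} (da : hom a (tens a a)) (ea : hom a unitob) :
  IsComonoidMorphism da ea da ea (idm a).
Proof. split; [rewrite ti|]; now simplid. Qed.

Lemma CMtens {a b a' b' : C} (da : hom a (tens a a)) (ea : hom a unitob)
  (db : hom b (tens b b)) (eb : hom b unitob)
  (da' : hom a' (tens a' a')) (ea' : hom a' unitob)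
  (db' : hom b' (tens b' b')) (eb' : hom b' unitob)
  (f : hom a b) (g : hom a' b') :
  IsComonoidMorphism da ea db eb f -> IsComonoidMorphism da' ea' db' eb' g ->
  IsComonoidMorphism (tensDelta da da') (tensEps ea ea') (tensDelta db db') (tensEps eb eb') (f ⊗ g).
Proof.
  intros [F1 F2] [G1 G2]. unfold tensDelta, tensEps. split.
  - rewrite <- cA, <- tc, F1, G1, tc. norm. now rewrite mF_nat.
  - rewrite <- cA, <- tc. now rewrite F2, G2.
Qed.

Lemma CMassoc {a b c : C} (da : hom a (tens a a)) (ea : hom a unitob)
  (db : hom b (tens b b)) (eb : hom b unitob) (dc : hom c (tens c c)) (ec : hom c unitob) :
  IsComonoidMorphism (tensDelta (tensDelta da db) dc) (tensEps (tensEps ea eb) ec)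
    (tensDelta da (tensDelta db dc)) (tensEps ea (tensEps eb ec)) (assoc a b c).
Proof.
  unfold tensDelta, tensEps. split.
  - replace (da ⊗ (middleFour b b c c ∘ db ⊗ dc))
      with ((idm (tens a a) ⊗ middleFour b b c c) ∘ (da ⊗ (db ⊗ dc))) by (now rewrite <- tc, ci).
    norm. rwr (an da db dc). rw (mF_assoc a a b b c c).
    replace ((middleFour a a b b ∘ da ⊗ db) ⊗ dc)
      with ((middleFour a a b b ⊗ idm (tens c c)) ∘ ((da ⊗ db) ⊗ dc)) by (now rewrite <- tc, ci).
    now norm.
  - replace (ea ⊗ (lunit unitob ∘ eb ⊗ ec))
      with ((idm unitob ⊗ lunit unitob) ∘ (ea ⊗ (eb ⊗ ec))) by (now rewrite <- tc, ci).
    norm. rwr (an ea eb ec). rw (tri (@unitob C) unitob). rewrite <- kelly3.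
    replace ((lunit unitob ∘ ea ⊗ eb) ⊗ ec)
      with ((lunit unitob ⊗ idm unitob) ∘ ((ea ⊗ eb) ⊗ ec)) by (now rewrite <- tc, ci).
    now norm.
Qed.


Definition epi {a b : C} (f : hom a b) := forall z (g h : hom b z), g ∘ f = h ∘ f -> g = h.
Definition LE {a b : C} (f : hom a b) := forall x : C, epi (idm x ⊗ f).

Lemma epi_comp {a b c : C} (f : hom b c) (g : hom a b) : epi f -> epi g -> epi (f ∘ g).
Proof. intros Ef Eg z k h E. apply Ef, Eg. rewrite <- !cA. exact E. Qed.
Lemma epi_split {a b : C} (f : hom a b) (s : hom b a) : f ∘ s = idm b -> epi f.
Proof. intros E z g h H. apply (rcancel f s); auto. Qed.
Lemma LE_epi {a b : C} (f : hom a b) : LE f -> epi f.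
Proof.
  intros L. assert (E : f = lunit b ∘ (idm unitob ⊗ f) ∘ lunit_inv a).
  { rewrite ln. rewrite <- cA, li2. now simplid. }
  rewrite E. apply epi_comp; [apply epi_comp|].
  - apply (epi_split _ (lunit_inv b)), li2.
  - apply L.
  - apply (epi_split _ (lunit a)), li1.
Qed.
Lemma LE_comp {a b c : C} (f : hom b c) (g : hom a b) : LE f -> LE g -> LE (f ∘ g).
Proof. intros Lf Lg x. rewrite <- t1r. apply epi_comp; auto. Qed.
Lemma LE_split {a b : C} (f : hom a b) (s : hom b a) : f ∘ s = idm b -> LE f.
Proof. intros E x. apply (epi_split _ (idm x ⊗ s)). now rewrite t1r, E, ti. Qed.
Lemma LE_tl {a b : C} (f : hom a b) (w : C) : LE f -> LE (idm w ⊗ f).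
Proof.
  intros L x.
  assert (E : idm x ⊗ (idm w ⊗ f) = assoc x w b ∘ (idm (tens x w) ⊗ f) ∘ assoc_inv x w a).
  { rewrite <- ti. rewrite an. rewrite <- cA, ai2. now simplid. }
  rewrite E. apply epi_comp; [apply epi_comp|].
  - apply (epi_split _ (assoc_inv x w b)), ai2.
  - apply L.
  - apply (epi_split _ (assoc x w a)), ai1.
Qed.
Lemma LE_tr {a b : C} (f : hom a b) (w : C) : LE f -> LE (f ⊗ idm w).
Proof.
  intros L x.
  assert (E : f ⊗ idm w = braid w b ∘ (idm w ⊗ f) ∘ braid_inv w a).
  { rewrite bn. rewrite <- cA, bi2. now simplid. }
  rewrite E, <- !t1r. apply epi_comp; [apply epi_comp|].
  - apply (epi_split _ (idm x ⊗ braid_inv w b)). now rewrite t1r, bi2, ti.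
  - apply LE_tl, L.
  - apply (epi_split _ (idm x ⊗ braid w a)). now rewrite t1r, bi1, ti.
Qed.

Lemma coeq_epi {X Y Q : C} (f g : hom X Y) (e : hom Y Q) : IsCoequalizer f g e -> epi e.
Proof.
  intros [E U] z k h H. destruct (U z (k ∘ e)) as [m [Hm Hu]].
  { rewrite <- !cA. now rewrite E. }
  rewrite (Hu k eq_refl), (Hu h (eq_sym H)). reflexivity.
Qed.

Lemma triI (a b : C) : (runit a ⊗ idm b) ∘ assoc_inv a unitob b = idm a ⊗ lunit b.
Proof. rewrite <- tri. rewrite <- cA, ai2. now simplid. Qed.
Lemma k2I (x y : C) : runit (tens x y) ∘ assoc_inv x y unitob = idm x ⊗ runit y.
Proof. rewrite <- kelly2. rewrite <- cA, ai2. now simplid. Qed.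

Lemma refl_pair (A : C) (d : hom A (tens A A)) (e : hom A unitob)
  (q : hom (tens (tens A A) A) A) : IsHerd A d e q ->
  IsReflexivePair (herdSigma d q) (herdTau e).
Proof.
  intros [[Hca [Hcl Hcr]] [_ [_ [H1 H2]]]].
  assert (Hco : assoc_inv A A A ∘ (idm A ⊗ d) ∘ d = (d ⊗ idm A) ∘ d).
  { rwr Hca. rewrite ai1. now simplid. }
  exists (assoc_inv A A A ∘ (idm A ⊗ d)). unfold herdSigma, herdTau. split.
  - norm. rewrite <- (ti A A). rwr (ain (idm A) (idm A) d). rw (pI A A A A).
    rw (t1r (d:=A) (assoc_inv A A A) (idm A ⊗ d)). rw (t1r (d:=A) (assoc_inv A A A ∘ (idm A ⊗ d)) d).
    rewrite Hco. split1. rw (ain (idm A) d (idm A)).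
    rw (t1l (d:=A) (assoc_inv A A A) (idm A ⊗ d)). rw (t1l (d:=A) q (assoc_inv A A A ∘ idm A ⊗ d)).
    rewrite H1. split1. rwr (ain (idm A) e (idm A)). rw (triI A A).
    rw (t1r (d:=A) (lunit A) (e ⊗ idm A)). rw (t1r (d:=A) (lunit A ∘ e ⊗ idm A) d).
    rewrite Hcl. reflexivity.
  - norm. rewrite <- (ti A A). rwr (ain (idm A) (idm A) e). rw (k2I A A).
    rw (t1r (d:=A) (runit A) (idm A ⊗ e)). rw (t1r (d:=A) (runit A ∘ idm A ⊗ e) d).
    rewrite Hcr. reflexivity.
Qed.


Lemma herd_assoc_id (A : C) (q : hom (tens (tens A A) A) A)
  (Hq : q ∘ ((q ⊗ idm A) ⊗ idm A)
    = q ∘ (idm (tens A A) ⊗ q) ∘ (idm (tens A A) ⊗ assoc_inv A A A)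
        ∘ assoc (tens A A) A (tens A A) ∘ assoc (tens (tens A A) A) A A) :
  (q ⊗ idm A) ∘ assoc_inv (tens A A) A A ∘ ((q ⊗ idm A) ⊗ idm (tens A A))
  = (q ⊗ idm A) ∘ assoc_inv (tens A A) A A
    ∘ (idm (tens A A) ⊗ ((q ⊗ idm A) ∘ assoc_inv (tens A A) A A))
    ∘ assoc (tens A A) (tens A A) (tens A A) ∘ (assoc (tens A A) A A ⊗ idm (tens A A)).
Proof.
  replace ((q ⊗ idm A) ⊗ idm (tens A A)) with ((q ⊗ idm A) ⊗ (idm A ⊗ idm A)) by (now rewrite ti).
  rw (ain (q ⊗ idm A) (idm A) (idm A)).
  rw (t1l (d:=A) q ((q ⊗ idm A) ⊗ idm A)). rewrite Hq. split1.
  rw (ain (idm (tens A A)) q (idm A)).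
  rw (t1l (d:=A) (idm (tens A A) ⊗ assoc_inv A A A) (assoc (tens A A) A (tens A A))).
  rw (t1l (d:=A) (idm (tens A A) ⊗ assoc_inv A A A ∘ assoc (tens A A) A (tens A A))
        (assoc (tens (tens A A) A) A A)).
  rwr (pB (tens A A) A A A). split1.
  rwr (pF (tens A A) (tens A A) A A).
  replace (assoc (tens A A) A A ⊗ idm (tens A A)) with (assoc (tens A A) A A ⊗ (idm A ⊗ idm A)) by (now rewrite ti).
  rw (ain (assoc (tens A A) A A) (idm A) (idm A)). reflexivity.
Qed.

Lemma main_dev
  (Hpres : TensorLeftPreservesReflexiveCoequalizers (C := C))
  (A : C) (d : hom A (tens A A)) (e : hom A unitob)
  (q : hom (tens (tens A A) A) A)
  (Hherd : IsHerd A d e q)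
  (H : C) (varpi : hom (tens A A) H)
  (Hvarpi : IsCoequalizer (herdSigma d q) (herdTau e) varpi)
  (dH : hom H (tens H H)) (eH : hom H unitob)
  (Hvarpi_com : IsComonoidMorphism (tensDelta d (opDelta d)) (tensEps e e) dH eH varpi)
  (mu : hom (tens H H) H)
  (Hmu : mu ∘ (varpi ⊗ varpi) ∘ assoc (tens A A) A A = varpi ∘ (q ⊗ idm A)) :
  mu ∘ (mu ⊗ idm H) = mu ∘ (idm H ⊗ mu) ∘ assoc H H H /\
  IsComonoidMorphism (tensDelta dH dH) (tensEps eH eH) dH eH mu.
Proof.
  pose proof (refl_pair A d e q Hherd) as Hrefl.
  destruct Hherd as [Hcom [Hqcm [Hq [H1 H2]]]].
  assert (Lw : LE varpi).
  { intro x. apply (coeq_epi _ _ _ (Hpres _ _ _ _ _ _ Hrefl Hvarpi x)). }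
  set (phi := (varpi ⊗ varpi) ∘ assoc (tens A A) A A).
  assert (Lphi : LE phi).
  { unfold phi. apply LE_comp; [| apply (LE_split _ (assoc_inv (tens A A) A A)), ai2].
    rewrite tsl. apply LE_comp; [apply LE_tr | apply LE_tl]; exact Lw. }
  assert (Hmu' : mu ∘ phi = varpi ∘ (q ⊗ idm A)) by (unfold phi; rewrite cA; exact Hmu).
  assert (HmuI : mu ∘ (varpi ⊗ varpi) = varpi ∘ (q ⊗ idm A) ∘ assoc_inv (tens A A) A A).
  { rewrite <- Hmu. rewrite <- cA, ai2. now simplid. }
  split.
  - assert (Ep : epi (phi ⊗ varpi)).
    { apply LE_epi. rewrite tsl. apply LE_comp; [apply LE_tr, Lphi | apply LE_tl, Lw]. }
    apply Ep.
    rewrite <- cA, <- tc, (ci varpi), Hmu'.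
    replace ((varpi ∘ q ⊗ idm A) ⊗ varpi) with ((varpi ⊗ varpi) ∘ ((q ⊗ idm A) ⊗ idm (tens A A)))
      by (now rewrite <- tc, cr).
    rewrite cA, HmuI.
    unfold phi. replace (((varpi ⊗ varpi) ∘ assoc (tens A A) A A) ⊗ varpi)
      with (((varpi ⊗ varpi) ⊗ varpi) ∘ (assoc (tens A A) A A ⊗ idm (tens A A)))
      by (now rewrite <- tc, cr).
    norm. rw (an varpi varpi varpi).
    rwr (tc varpi (idm H) (varpi ⊗ varpi) mu). rewrite HmuI.
    replace (varpi ⊗ (varpi ∘ q ⊗ idm A ∘ assoc_inv (tens A A) A A))
      with ((varpi ⊗ varpi) ∘ (idm (tens A A) ⊗ ((q ⊗ idm A) ∘ assoc_inv (tens A A) A A)))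
      by (rewrite <- tc, cr; now norm).
    norm. rw HmuI. f_equal.
    pose proof (herd_assoc_id A q Hq) as HA. norm. rw HA. reflexivity.
  - set (od := opDelta d).
    assert (Cq1 : IsComonoidMorphism (tensDelta (tensDelta (tensDelta d od) d) od)
                    (tensEps (tensEps (tensEps e e) e) e) (tensDelta d od) (tensEps e e) (q ⊗ idm A)).
    { apply CMtens; [exact Hqcm | apply CMid]. }
    assert (Cphi : IsComonoidMorphism (tensDelta (tensDelta (tensDelta d od) d) od)
                    (tensEps (tensEps (tensEps e e) e) e) (tensDelta dH dH) (tensEps eH eH) phi).
    { unfold phi. eapply CMcomp; [apply CMassoc | apply CMtens; exact Hvarpi_com]. }
    assert (Cpsi := CMcomp _ _ _ _ _ _ _ _ Cq1 Hvarpi_com).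
    assert (Ep : epi phi) by (apply LE_epi, Lphi).
    destruct Cphi as [P1 P2]. destruct Cpsi as [Q1 Q2]. split.
    + apply Ep. rewrite <- cA, Hmu', Q1, <- cA, P1, cA, <- tc, Hmu'. reflexivity.
    + apply Ep. rewrite <- cA, Hmu', Q2, P2. reflexivity.
Qed.

End Dev.

Theorem mainTheorem1 (C : BMCData) (HC : IsBMC C)
  (Hcoeq : HasReflexiveCoequalizers (C := C))
  (Hpres : TensorLeftPreservesReflexiveCoequalizers (C := C))
  (A : C) (d : hom A (tens A A)) (e : hom A unitob)
  (q : hom (tens (tens A A) A) A)
  (Hherd : IsHerd A d e q)
  (H : C) (varpi : hom (tens A A) H)
  (Hvarpi : IsCoequalizer (herdSigma d q) (herdTau e) varpi)
  (dH : hom H (tens H H)) (eH : hom H unitob)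
  (HHcom : IsComonoid H dH eH)
  (Hvarpi_com : IsComonoidMorphism (tensDelta d (opDelta d)) (tensEps e e) dH eH varpi)
  (mu : hom (tens H H) H)
  (Hmu : mu ∘ (varpi ⊗ varpi) ∘ assoc (tens A A) A A = varpi ∘ (q ⊗ idm A)) :
  mu ∘ (mu ⊗ idm H) = mu ∘ (idm H ⊗ mu) ∘ assoc H H H /\
  IsComonoidMorphism (tensDelta dH dH) (tensEps eH eH) dH eH mu.
Proof.
  exact (main_dev HC Hpres A d e q Hherd H varpi Hvarpi dH eH Hvarpi_com mu Hmu).
Qed.
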